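(* Let $L\ge2$, $N\ge d_x$, $X_\epsilon$ of rank $d_x$, $\tilde W_{L:1}X=Y$, and $p=\min(d_x,d_y)$ (i.e. every hidden width $d_i$ is at least $\min(d_x,d_y)$). Then the end-to-end matrices of all global minimizers of $\mathcal L_{base}$ and of $\mathcal L_{st}$ coincide, both being equal to $YX_\epsilon^T(X_\epsilon X_\epsilon^T)^{-1}$.
   Context: Clean inputs $x_i\in\mathbb R^{d_x}$, targets $y_i\in\mathbb R^{d_y}$, noise $\epsilon_i\in\mathbb R^{d_x}$, $i=1,\dots,N$; $X\in\mathbb R^{d_x\times N}$ has columns $x_i$, $X_\epsilon$ has columns $x_i+\epsilon_i$, $Y\in\mathbb R^{d_y\times N}$ has columns $y_i$. A deep linear network with $L$ layers is a tuple $(W_L,\dots,W_1)$ with $W_i\in\mathbb R^{d_i\times d_{i-1}}$, $d_0=d_x$, $d_L=d_y$; $W_{i:j}:=W_iW_{i-1}\cdots W_j$; $p:=\min_{0\le i\le L}d_i$. Base loss: $\mathcal L_{base}(W_L,\dots,W_1)=\|W_{L:1}X_\epsilon-Y\|_F^2$. Fix $i^*\in\{1,\dots,L\}$, $\lambda>0$ and teacher weights $(\tilde W_L,\dots,\tilde W_1)$ of the same shapes; the student–teacher loss is $\mathcal L_{st}(W_L,\dots,W_1)=\|W_{L:1}X_\epsilon-Y\|_F^2+\lambda\|W_{i^*:1}X_\epsilon-\tilde W_{i^*:1}X\|_F^2$. *)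

(* Defs.v *)
From HB Require Import structures.
From mathcomp Require Import all_boot all_order all_algebra.
Set Implicit Arguments. Unset Strict Implicit. Unset Printing Implicit Defensive.
Import Order.TTheory GRing.Theory Num.Theory.
Local Open Scope ring_scope.

(* A deep linear network with widths d : nat -> nat (d 0 = d_x, d L = d_y)
   is a family W with  W i : 'M_(d i.+1, d i)  playing the role of the
   paper's W_{i+1} (0-based indexing).  Components with i >= L are
   irrelevant to all losses below. *)
Definition weights (R : pzRingType) (d : nat -> nat) :=
  forall i : nat, 'M[R]_(d i.+1, d i).

Fixpoint prodW (R : pzRingType) (d : nat -> nat) (W : weights R d) (k : nat)
  : 'M[R]_(d k, d 0) :=
  match k with
  | 0 => 1%:M
  | k'.+1 => W k' *m prodW W k'
  end.

Definition frob2 (R : pzRingType) (m n : nat) (A : 'M[R]_(m, n)) : R :=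
  \sum_(i < m) \sum_(j < n) A i j ^+ 2.

Definition pmin (d : nat -> nat) (L : nat) : nat :=
  \big[minn/d 0%N]_(i < L.+1) d i.

Definition L_base (R : pzRingType) (d : nat -> nat) (L N : nat)
  (Xe : 'M[R]_(d 0, N)) (Y : 'M[R]_(d L, N)) (W : weights R d) : R :=
  frob2 (prodW W L *m Xe - Y).

Definition L_st (R : pzRingType) (d : nat -> nat) (L N istar : nat) (lam : R)
  (X Xe : 'M[R]_(d 0, N)) (Y : 'M[R]_(d L, N)) (Wt : weights R d)
  (W : weights R d) : R :=
  frob2 (prodW W L *m Xe - Y)
  + lam * frob2 (prodW W istar *m Xe - prodW Wt istar *m X).

Definition global_minimizer (R : numDomainType) (T : Type) (f : T -> R) (x : T) :=
  forall y : T, f x <= f y.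

(* Main.v *)
Require Import Defs.
From HB Require Import structures.
From mathcomp Require Import all_boot all_order all_algebra.
From mathcomp Require Import lra.
Import Order.TTheory GRing.Theory Num.Theory.
Set Implicit Arguments. Unset Strict Implicit.
Local Open Scope ring_scope.

Section Aux.
Variable R : realFieldType.

Definition ip (m n : nat) (a b : 'M[R]_(m, n)) : R :=
  \sum_(i < m) \sum_(j < n) a i j * b i j.

Lemma frob2D m n (a b : 'M[R]_(m, n)) :
  frob2 (a + b) = frob2 a + frob2 b + ip a b *+ 2.
Proof.
rewrite /frob2 /ip -sumrMnl -!big_split /=; apply: eq_bigr => i _.
rewrite -sumrMnl -!big_split /=; apply: eq_bigr => j _.
by rewrite !mxE sqrrD addrAC.
Qed.

Lemma ip_tr m n (a b : 'M[R]_(m, n)) : ip a b = \tr (a *m b^T).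
Proof.
rewrite /ip /mxtrace; apply: eq_bigr => i _; rewrite !mxE.
by apply: eq_bigr => j _; rewrite !mxE.
Qed.

Lemma frob2_ge0 m n (a : 'M[R]_(m, n)) : 0 <= frob2 a.
Proof. by apply: sumr_ge0 => i _; apply: sumr_ge0 => j _; apply: sqr_ge0. Qed.

Lemma frob2_eq0 m n (a : 'M[R]_(m, n)) : frob2 a = 0 -> a = 0.
Proof.
move=> H; apply/matrixP => i j; rewrite mxE.
have Hi : \sum_(j < n) a i j ^+ 2 = 0.
  move: H; rewrite /frob2 => /psumr_eq0P; apply => // k _.
  by apply: sumr_ge0 => l _; apply: sqr_ge0.
have : a i j ^+ 2 = 0.
  by move: Hi => /psumr_eq0P; apply => // k _; apply: sqr_ge0.
by move/eqP; rewrite sqrf_eq0 => /eqP.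
Qed.

Lemma gram_unit k N (Xe : 'M[R]_(k, N)) : row_free Xe -> Xe *m Xe^T \in unitmx.
Proof.
move=> rf; rewrite -row_free_unit -kermx_eq0.
set K := kermx _.
have HK : K *m Xe *m Xe^T = 0 by rewrite -mulmxA mulmx_ker.
have H0 : K *m Xe = 0.
  set A := K *m Xe.
  have HA : A *m A^T = 0 by rewrite /A trmx_mul mulmxA HK mul0mx.
  apply/matrixP => i j; rewrite [RHS]mxE.
  have : (A *m A^T) i i = 0 by rewrite HA mxE.
  rewrite mxE => Hs.
  have : A i j * A^T j i = 0.
    move: Hs => /psumr_eq0P; apply => // l _; rewrite [(_^T) _ _]mxE -expr2; exact: sqr_ge0.
  by rewrite [(_^T) _ _]mxE -expr2 => /eqP; rewrite sqrf_eq0 => /eqP.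
by rewrite -(mulmx_free_eq0 _ rf) H0.
Qed.

Lemma pyth m k N (Xe : 'M[R]_(k, N)) (T : 'M[R]_(m, N)) (P : 'M[R]_(m, k)) :
  Xe *m Xe^T \in unitmx ->
  frob2 (P *m Xe - T) =
  frob2 (T *m Xe^T *m invmx (Xe *m Xe^T) *m Xe - T)
  + frob2 ((P - T *m Xe^T *m invmx (Xe *m Xe^T)) *m Xe).
Proof.
move=> U; set Q := T *m Xe^T *m invmx _.
have -> : P *m Xe - T = (P - Q) *m Xe + (Q *m Xe - T).
  by rewrite mulmxBl addrA subrK.
rewrite frob2D ip_tr -mulmxA.
have -> : Xe *m (Q *m Xe - T)^T = 0.
  rewrite linearB /= trmx_mul !trmx_mul trmx_inv trmx_mul trmxK.
  by rewrite mulmxBr !mulmxA mulmxV // mul1mx subrr.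
by rewrite mulmx0 mxtrace0 mul0rn addr0 addrC.
Qed.
Lemma frob2_0 m n : frob2 (0 : 'M[R]_(m, n)) = 0.
Proof. by rewrite /frob2 big1 // => i _; rewrite big1 // => j _; rewrite mxE expr0n. Qed.

End Aux.
Unset Implicit Arguments.

Theorem mainTheorem7 (R : realFieldType) (L N : nat) (d : nat -> nat)
  (X E : 'M[R]_(d 0%N, N)) (Y : 'M[R]_(d L, N))
  (istar : nat) (lam : R) (Wt : weights R d) :
  (2 <= L)%N ->
  (d 0%N <= N)%N ->
  (1 <= istar <= L)%N ->
  0 < lam ->
  \rank (X + E)%R = d 0%N ->
  prodW Wt L *m X = Y ->
  pmin d L = minn (d 0%N) (d L) ->
  let Xe := X + E in
  let Wstar := Y *m Xe^T *m invmx (Xe *m Xe^T) in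
  (forall W : weights R d,
     global_minimizer (L_base Xe Y) W -> prodW W L = Wstar) /\
  (forall W : weights R d,
     global_minimizer (L_st istar lam X Xe Y Wt) W -> prodW W L = Wstar).
Proof.
move=> hL hN /andP[hi1 hiL] hlam hrk hY hp Xe Wstar.
have rf : row_free Xe by apply/eqP.
have U := gram_unit rf.
set B := X *m Xe^T *m invmx (Xe *m Xe^T).
pose W' : weights R d := fun i => match i as n return 'M[R]_(d n.+1, d n) with
  | 0 => Wt 0%N *m B | k.+1 => Wt k.+1 end.
have HW' : forall k, (0 < k)%N -> prodW W' k = prodW Wt k *m B.
  elim=> [//|k IH] _; case: k IH => [|k] IH; first by rewrite /= !mulmx1.
  have -> : prodW W' k.+2 = Wt k.+1 *m prodW W' k.+1 by [].
  by rewrite IH // mulmxA.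
have HWs : prodW W' L = Wstar.
  by rewrite HW' ?(leq_trans _ hL) // /Wstar /B -hY !mulmxA.
have fin : forall M : 'M[R]_(d L, d 0%N),
    frob2 ((M - Wstar) *m Xe) = 0 -> M = Wstar.
  move=> M /frob2_eq0 H; apply/eqP; rewrite -subr_eq0; apply/eqP.
  have : (M - Wstar) *m (Xe *m Xe^T) *m invmx (Xe *m Xe^T) = 0.
    by rewrite mulmxA H !mul0mx.
  by rewrite mulmxK.
have P1 : forall M : 'M[R]_(d L, d 0%N), frob2 (M *m Xe - Y) =
    frob2 (Wstar *m Xe - Y) + frob2 ((M - Wstar) *m Xe).
  by move=> M; rewrite (pyth _ _ U).
split.
  move=> W HW; apply: fin.
  have := HW W'; rewrite /L_base (P1 (prodW W L)) (P1 (prodW W' L)) HWs subrr mul0mx frob2_0 addr0.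
  have := frob2_ge0 ((prodW W L - Wstar) *m Xe).
  move=> h1 h2; apply/eqP; rewrite eq_le h1 andbT.
  by rewrite -(lerD2l (frob2 (Wstar *m Xe - Y))) addr0.
move=> W HW; apply: fin.
have P2 : forall M : 'M[R]_(d istar, d 0%N),
    frob2 (M *m Xe - prodW Wt istar *m X) =
    frob2 (prodW W' istar *m Xe - prodW Wt istar *m X)
    + frob2 ((M - prodW W' istar) *m Xe).
  move=> M; rewrite (pyth _ _ U) HW' // /B !mulmxA.
  by rewrite -!mulmxA.
have := HW W'; rewrite /L_st (P1 (prodW W L)) (P1 (prodW W' L)) HWs subrr mul0mx frob2_0 addr0.
rewrite (P2 (prodW W istar)) (P2 (prodW W' istar)) subrr mul0mx frob2_0 addr0.
have := frob2_ge0 ((prodW W L - Wstar) *m Xe).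
have := mulr_ge0 (ltW hlam) (frob2_ge0 ((prodW W istar - prodW W' istar) *m Xe)).
move=> h1 h2 h3; apply/eqP; rewrite eq_le h2 andbT.
rewrite mulrDr in h3. lra.
Qed.
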